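(* Let $\alpha$ be a differentiable real-valued function on the set of real symmetric positive definite $3\times 3$ matrices, and let $h = \frac{\partial \alpha}{\partial C}$ be its gradient, i.e. the symmetric-matrix-valued function such that $D\alpha(C)\,\delta C = \mathrm{tr}\big(h(C)\,\delta C\big)$ for all symmetric $\delta C$. Assume $h$ is isotropic: $R^T h(C) R = h(R^T C R)$ for every rotation $R$ (real $3\times 3$ matrix with $R^TR=I$, $\det R=1$) and every symmetric positive definite $C$. For a symmetric positive definite $B$ set $\frac{\sigma}{\rho} := B^{1/2} h(B) B^{1/2}$. Then the function $\alpha\circ\exp$, defined on real symmetric $3\times 3$ matrices, is differentiable and its gradient at $\ln B$ equals $\frac{\sigma}{\rho}$: for every symmetric positive definite $B$ and every symmetric $\delta$, $$D(\alpha\circ\exp)(\ln B)\,\delta = \mathrm{tr}\Big(\frac{\sigma}{\rho}\,\delta\Big),\qquad\text{i.e.}\qquad \frac{\sigma}{\rho} = \frac{\partial(\alpha\circ\exp)}{\partial(\ln B)}.$$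
   Context: Physical interpretation: for a deformation gradient $F$ with polar decomposition $F=RU$, $C=F^TF$ is the right and $B=FF^T$ the left Cauchy–Green tensor; the hyperelastic constitutive law is $\Sigma/\rho_0 = \frac{\partial\alpha}{\partial C}(C)$ with $\Sigma$ the second Piola–Kirchhoff stress and $\rho_0$ the initial mass density; the Cauchy stress $\sigma$ and current density $\rho$ satisfy $\sigma/\rho = F(\Sigma/\rho_0)F^T$, which under isotropy equals $B^{1/2}h(B)B^{1/2}$. Here $B^{1/2}$ is the symmetric positive definite square root of $B$, $\ln B$ is the unique symmetric matrix with $\exp(\ln B)=B$, and gradients are taken with respect to the inner product $(X,Y)\mapsto \mathrm{tr}(XY)$ on symmetric matrices. *)

(* Defs.v *)
From HB Require Import structures.
From mathcomp Require Import all_boot all_order all_algebra.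
From mathcomp Require Import all_classical all_reals all_analysis.
Set Implicit Arguments. Unset Strict Implicit. Unset Printing Implicit Defensive.
Import Order.TTheory GRing.Theory Num.Theory numFieldNormedType.Exports.
Local Open Scope ring_scope.

Section Defs.
Variable R : realType.

Definition symmx (A : 'M[R]_3) : Prop := A^T = A.

Definition posdef (A : 'M[R]_3) : Prop :=
  symmx A /\ forall x : 'cV[R]_3, x != 0 -> 0 < (x^T *m A *m x) 0 0.

Definition rotation (Q : 'M[R]_3) : Prop := Q^T *m Q = 1%:M /\ \det Q = 1.

Definition expm (A : 'M[R]_3) : 'M[R]_3 :=
  \matrix_(i, j) limn (fun n : nat => ((\sum_(k < n) (k`!%:R)^-1 *: A ^+ k) i j : R^o)).

Definition mnorm (A : 'M[R]_3) : R := \sum_i \sum_j `|A i j|.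

(* f (defined near C in the space of symmetric matrices) is Frechet
   differentiable at C along symmetric directions, and its gradient w.r.t.
   the inner product (X,Y) |-> tr(XY) is the symmetric matrix G:
   f (C + D) = f C + tr (G D) + o(|D|) for symmetric D. *)
Definition sym_gradient (f : 'M[R]_3 -> R) (C G : 'M[R]_3) : Prop :=
  symmx G /\
  forall eps : R, 0 < eps -> exists r : R, 0 < r /\
    forall D : 'M[R]_3, symmx D -> mnorm D < r ->
      `|f (C + D) - f C - \tr (G *m D)| <= eps * mnorm D.

End Defs.

(* Main.v *)
Require Import Defs.
From HB Require Import structures.
From mathcomp Require Import all_boot all_order all_algebra.
From mathcomp Require Import all_classical all_reals all_analysis.
From mathcomp Require Import ring lra complex.
Import Order.TTheory GRing.Theory Num.Theory numFieldNormedType.Exports.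
Set Implicit Arguments. Unset Strict Implicit. Unset Printing Implicit Defensive.
Local Open Scope classical_set_scope.
Local Open Scope ring_scope.

Section Part1.
Variable R : realType.
Local Notation M3 := 'M[R]_3.

Lemma mnorm_ge0 (A : M3) : 0 <= mnorm A.
Proof. by apply: sumr_ge0 => i _; apply: sumr_ge0. Qed.

Lemma mnorm_entry (A : M3) i j : `|A i j| <= mnorm A.
Proof.
rewrite /mnorm (bigD1 i) //= (bigD1 j) //= -addrA lerDl.
by apply: addr_ge0; apply: sumr_ge0 => *; [|apply: sumr_ge0] .
Qed.

Lemma mnorm_row (A : M3) i : \sum_j `|A i j| <= mnorm A.
Proof.
rewrite /mnorm [leRHS](bigD1 i) //= lerDl.
by apply: sumr_ge0 => *; apply: sumr_ge0.
Qed.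

Lemma mnormD (A B : M3) : mnorm (A + B) <= mnorm A + mnorm B.
Proof.
rewrite /mnorm -big_split /=; apply: ler_sum => i _.
rewrite -big_split /=; apply: ler_sum => j _; rewrite mxE; exact: ler_normD.
Qed.

Lemma mnormN (A : M3) : mnorm (- A) = mnorm A.
Proof. by apply: eq_bigr => i _; apply: eq_bigr => j _; rewrite mxE normrN. Qed.

Lemma mnormZ (c : R) (A : M3) : mnorm (c *: A) = `|c| * mnorm A.
Proof.
rewrite /mnorm mulr_sumr; apply: eq_bigr => i _; rewrite mulr_sumr.
by apply: eq_bigr => j _; rewrite mxE normrM.
Qed.

Lemma mnormM (A B : M3) : mnorm (A *m B) <= mnorm A * mnorm B.
Proof.
rewrite /mnorm mulr_suml; apply: ler_sum => i _.
apply: (@le_trans _ _ (\sum_j \sum_k `|A i k| * `|B k j|)).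
  apply: ler_sum => j _; rewrite mxE; apply: (le_trans (ler_norm_sum _ _ _)).
  by apply: ler_sum => k _; rewrite normrM.
rewrite exchange_big /= mulr_suml; apply: ler_sum => k _.
rewrite -mulr_sumr; apply: ler_wpM2l => //; exact: mnorm_row.
Qed.

Lemma mnorm_tr (A B : M3) : `|\tr (A *m B)| <= mnorm A * mnorm B.
Proof.
rewrite /mxtrace mulr_suml; apply: (le_trans (ler_norm_sum _ _ _)).
apply: ler_sum => i _; rewrite mxE mulr_suml.
apply: (le_trans (ler_norm_sum _ _ _)); apply: ler_sum => k _.
by rewrite normrM; apply: ler_wpM2l => //; exact: mnorm_entry.
Qed.

Lemma mnorm1 : mnorm (1%:M : M3) = 3%:R.
Proof.
rewrite /mnorm !big_ord_recr /= !big_ord0 !mxE /=.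
by rewrite /= !normr0 !normr1; lra.
Qed.

Lemma mnormX (A : M3) k : mnorm (A ^+ k) <= 3%:R * mnorm A ^+ k.
Proof.
elim: k => [|k IH]; first by rewrite expr0 mulr1 -mnorm1.
rewrite exprS (le_trans (mnormM _ _)) // exprS mulrCA.
by apply: ler_wpM2l => //; exact: mnorm_ge0.
Qed.


Lemma cvg_bsum (I : Type) (r : seq I) (f : I -> nat -> R) (l : I -> R) :
  (forall i, f i n @[n --> \oo] --> l i) ->
  (\sum_(i <- r) f i n) @[n --> \oo] --> \sum_(i <- r) l i.
Proof.
move=> H; elim: r => [|a r IH].
  rewrite big_nil; under eq_fun do rewrite big_nil; exact: cvg_cst.
rewrite big_cons; under eq_fun do rewrite big_cons; exact: cvgD.
Qed.

Definition psum (A : M3) (n : nat) : M3 := \sum_(k < n) (k`!%:R)^-1 *: A ^+ k.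

Lemma psum_entry A n i j :
  psum A n i j = series (fun k => (k`!%:R)^-1 * (A ^+ k) i j) n.
Proof.
rewrite /psum summxE /series /= big_mkord; apply: eq_bigr => k _; by rewrite mxE.
Qed.

Lemma is_cvg_psum A i j : cvgn (fun n => psum A n i j).
Proof.
under eq_fun do rewrite psum_entry.
apply: normed_cvg.
apply: (@series_le_cvg _ _ (fun k => 3%:R * exp_coeff (mnorm A) k)).
- by move=> k /=.
- move=> k; rewrite /exp_coeff /=; apply: mulr_ge0 => //.
  apply: divr_ge0 => //; apply: exprn_ge0; exact: mnorm_ge0.
- move=> k /=; rewrite /exp_coeff /= normrM ger0_norm ?invr_ge0 //.
  rewrite mulrC mulrA ler_wpM2r ?invr_ge0 //.
  exact: le_trans (mnorm_entry _ _ _) (mnormX _ _).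
- have -> : series (fun k => 3%:R * exp_coeff (mnorm A) k) =
     (fun n => 3%:R * series (exp_coeff (mnorm A)) n).
    by apply: funext => n; rewrite /series /= mulr_sumr.
  apply: is_cvgMr; exact: is_cvg_series_exp_coeff.
Qed.

Lemma cvg_psum A i j : psum A n i j @[n --> \oo] --> expm A i j.
Proof.
rewrite mxE.
have := @is_cvg_psum A i j => /cvg_ex [l Hl].
by rewrite (cvg_lim _ Hl).
Qed.


Definition mxcvg (u : nat -> M3) (M : M3) := forall i j, u n i j @[n --> \oo] --> M i j.

Lemma mxcvg_expm A : mxcvg (psum A) (expm A).
Proof. move=> i j; exact: cvg_psum. Qed.

Lemma mxcvgS u M : mxcvg u M -> mxcvg (fun n => u n.+1) M.
Proof. by move=> H i j; have := H i j; rewrite -cvg_shiftS. Qed.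

Lemma mxcvgD u v M N : mxcvg u M -> mxcvg v N -> mxcvg (fun n => u n + v n) (M + N).
Proof.
move=> Hu Hv i j; rewrite mxE; under eq_fun do rewrite mxE; exact: cvgD.
Qed.

Lemma mxcvgN u M : mxcvg u M -> mxcvg (fun n => - u n) (- M).
Proof.
move=> Hu i j; rewrite mxE; under eq_fun do rewrite mxE; exact: cvgN.
Qed.

Lemma mxcvgB u v M N : mxcvg u M -> mxcvg v N -> mxcvg (fun n => u n - v n) (M - N).
Proof. by move=> Hu Hv; apply: mxcvgD => //; exact: mxcvgN. Qed.

Lemma mxcvg_mull X u M : mxcvg u M -> mxcvg (fun n => X *m u n) (X *m M).
Proof.
move=> Hu i j; rewrite mxE; under eq_fun do rewrite mxE.
apply: cvg_bsum => k; exact: cvgMr.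
Qed.

Lemma mxcvg_mulr X u M : mxcvg u M -> mxcvg (fun n => u n *m X) (M *m X).
Proof.
move=> Hu i j; rewrite mxE; under eq_fun do rewrite mxE.
apply: cvg_bsum => k; exact: cvgMl.
Qed.

Lemma mxcvg_tr u M : mxcvg u M -> mxcvg (fun n => (u n)^T) M^T.
Proof. by move=> Hu i j; rewrite mxE; under eq_fun do rewrite mxE; exact: Hu. Qed.

Lemma mxcvg_uniq u M N : mxcvg u M -> mxcvg u N -> M = N.
Proof.
move=> HM HN; apply/matrixP => i j.
exact: (cvg_unique _ (HM i j) (HN i j)).
Qed.

Lemma mxcvg_trace u M : mxcvg u M -> \tr (u n) @[n --> \oo] --> \tr M.
Proof. move=> Hu; apply: cvg_bsum => i; exact: Hu. Qed.

Lemma mxcvg_mnorm u M : mxcvg u M -> mnorm (u n) @[n --> \oo] --> mnorm M.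
Proof.
move=> Hu; apply: cvg_bsum => i; apply: cvg_bsum => j; exact: cvg_norm.
Qed.

Lemma lim_le_bound (s : nat -> R) (l c : R) :
  s n @[n --> \oo] --> l -> (forall n, s n <= c) -> l <= c.
Proof. by move=> Hs Hc; apply: (cvgr_to_le Hs); apply: nearW. Qed.

Lemma trmxX (A : M3) k : (A ^+ k)^T = A^T ^+ k.
Proof.
elim: k => [|k IH]; first by rewrite !expr0 trmx1.
by rewrite exprS -mulmxE trmx_mul IH exprSr mulmxE.
Qed.

Lemma psum_tr (A : M3) n : (psum A n)^T = psum A^T n.
Proof.
rewrite /psum linear_sum /=; apply: eq_bigr => k _; by rewrite linearZ /= trmxX.
Qed.

Lemma expm_tr (A : M3) : (expm A)^T = expm A^T.
Proof.
apply: (@mxcvg_uniq (fun n => psum A^T n)); last exact: mxcvg_expm.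
have := mxcvg_tr (@mxcvg_expm A); by under eq_fun do rewrite psum_tr.
Qed.

Lemma expm_sym (A : M3) : symmx A -> symmx (expm A).
Proof. by rewrite /symmx => H; rewrite expm_tr H. Qed.

Lemma psum_comm (X A : M3) n : X *m A = A *m X -> X *m psum A n = psum A n *m X.
Proof.
move=> H; rewrite /psum mulmx_sumr mulmx_suml; apply: eq_bigr => k _.
rewrite -scalemxAl -scalemxAr; congr (_ *: _).
have : GRing.comm X A by rewrite /GRing.comm -!mulmxE.
by move/(commrX k); rewrite /GRing.comm -!mulmxE.
Qed.

Lemma expm_comm (X A : M3) : X *m A = A *m X -> X *m expm A = expm A *m X.
Proof.
move=> H; apply: (@mxcvg_uniq (fun n => X *m psum A n)).
  exact: mxcvg_mull (@mxcvg_expm A).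
under eq_fun do rewrite psum_comm //; exact: mxcvg_mulr (@mxcvg_expm A).
Qed.


Lemma powle (x y : R) k : 0 <= x -> x <= y -> x ^+ k <= y ^+ k.
Proof.
move=> hx hxy; apply: lerXn2r => //; rewrite nnegrE //; exact: le_trans hxy.
Qed.

Fixpoint Tk (L D : M3) k := if k is k'.+1 then L *m Tk L D k' + D *m L ^+ k' else 0.

Section Est.
Variables L D : M3.
Let a := mnorm L.
Let d := mnorm D.
Let b := a + 1.
Hypothesis d1 : d <= 1.

Let a0 : 0 <= a. Proof. exact: mnorm_ge0. Qed.
Let d0 : 0 <= d. Proof. exact: mnorm_ge0. Qed.
Let b1 : 1 <= b. Proof. have := a0; rewrite /b; lra. Qed.

Lemma est_M k : mnorm ((L + D) ^+ k - L ^+ k) <= 3%:R * d * (2%:R * b) ^+ k.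
Proof.
elim: k => [|k IH]; first by rewrite subrr /mnorm; under eq_bigr do under eq_bigr do rewrite mxE normr0; rewrite !big1 //; rewrite expr0 mulr1; exact: mulr_ge0.
have E : (L + D) ^+ k.+1 - L ^+ k.+1 = (L + D) *m ((L + D) ^+ k - L ^+ k) + D *m L ^+ k.
  by rewrite !exprS -!mulmxE mulmxBr mulmxDl mulmxDl opprD !addrA addrNK.
rewrite E; apply: (le_trans (mnormD _ _)).
have h1 := mnormM (L + D) ((L + D) ^+ k - L ^+ k).
have h2 := mnormM D (L ^+ k).
have h3 : mnorm (L + D) <= b by apply: (le_trans (mnormD _ _)); have := d1; rewrite /b /a /d; lra.
have h4 := mnormX L k.
have a0' := a0; have d0' := d0; have b1' := b1.
have h5 : a ^+ k <= b ^+ k by apply: powle => //; rewrite /b; lra.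
have h6 : b ^+ k <= (2%:R * b) ^+ k by apply: powle; lra.
have h7 : 0 <= b ^+ k by apply: exprn_ge0; lra.
have h8 := mnorm_ge0 ((L + D) ^+ k - L ^+ k).
have h9 := mnorm_ge0 (L ^+ k).
have h10 := mnorm_ge0 (L + D).
rewrite exprS.
set P := (2%:R * b) ^+ k in h6 IH *.
set m := mnorm ((L + D) ^+ k - L ^+ k) in h1 h8 IH *.
set x := mnorm (L + D) in h1 h3 h10 *.
set y := mnorm (L ^+ k) in h2 h4 h9 *.
rewrite -/d in h2 *.
have hb : 1 <= b by [].
have hP : 0 <= P by lra.
have e1 : x * m <= b * (3%:R * d * P) by apply: ler_pM => //; lra.
have e2 : d * y <= d * (3%:R * b ^+ k) by apply: ler_wpM2l => //; lra.
have e3 : d * (3%:R * b ^+ k) <= d * (3%:R * (b * P)).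
  apply: ler_wpM2l => //; apply: ler_wpM2l => //.
  have : P <= b * P by rewrite ler_peMl //.
  lra.
lra.
Qed.

Lemma est_R k : mnorm ((L + D) ^+ k - L ^+ k - Tk L D k) <= 3%:R * d ^+ 2 * (4%:R * b) ^+ k.
Proof.
have a0' := a0; have d0' := d0; have b1' := b1.
elim: k => [|k IH].
  rewrite /= subrr subr0 /mnorm; under eq_bigr do under eq_bigr do rewrite mxE normr0.
  rewrite !big1 // expr0 mulr1; apply: mulr_ge0 => //; exact: exprn_ge0.
have E : (L + D) ^+ k.+1 - L ^+ k.+1 - Tk L D k.+1 =
   L *m ((L + D) ^+ k - L ^+ k - Tk L D k) + D *m ((L + D) ^+ k - L ^+ k).
  rewrite /= !exprS -!mulmxE !mulmxBr mulmxDl.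
  rewrite !opprD !addrA; congr (_ + _).
  rewrite -!addrA; congr (_ + _); rewrite addrC -!addrA; congr (_ + _).
rewrite E; apply: (le_trans (mnormD _ _)).
have h1 := mnormM L ((L + D) ^+ k - L ^+ k - Tk L D k).
have h2 := mnormM D ((L + D) ^+ k - L ^+ k).
have h3 := est_M k.
have h6 : (2%:R * b) ^+ k <= (4%:R * b) ^+ k by apply: powle; lra.
have h8 := mnorm_ge0 ((L + D) ^+ k - L ^+ k - Tk L D k).
have h9 := mnorm_ge0 ((L + D) ^+ k - L ^+ k).
rewrite [(4%:R * b) ^+ _]exprS.
set P := (4%:R * b) ^+ k in h6 IH *.
set Q := (2%:R * b) ^+ k in h6 h3 *.
set r := mnorm ((L + D) ^+ k - L ^+ k - Tk L D k) in h1 h8 IH *.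
set m := mnorm ((L + D) ^+ k - L ^+ k) in h2 h3 h9 *.
rewrite -/a -/d in h1 h2 *.
have hQ : 0 <= Q by apply: exprn_ge0; lra.
have hP : 0 <= P by lra.
have e1 : a * r <= b * (3%:R * d ^+ 2 * P) by apply: ler_pM => //; rewrite /b; lra.
have e2 : d * m <= d * (3%:R * d * Q) by apply: ler_wpM2l.
have e3 : Q <= b * P by apply: (le_trans h6); rewrite ler_peMl //.
have e4 : d * (3%:R * d * Q) <= d * (3%:R * d * (b * P)).
  apply: ler_wpM2l => //; apply: ler_wpM2l => //; apply: mulr_ge0 => //; lra.
have e5 : 0 <= d ^+ 2 * b * P.
  apply: mulr_ge0 => //; apply: mulr_ge0; [exact: exprn_ge0 | lra].
have : d ^+ 2 = d * d by rewrite expr2.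
lra.
Qed.

End Est.

Lemma tr_Tk (L D X : M3) k : X *m L = L *m X ->
  \tr (X *m Tk L D k.+1) = k.+1%:R * \tr (X *m L ^+ k *m D).
Proof.
elim: k X => [|k IH] X HX.
  by rewrite /= mulmx0 add0r expr0 mul1r !mulmxE !mulr1.
rewrite [Tk _ _ _.+1]/= mulmxDr mxtraceD mulmxA IH; last first.
  by rewrite mulmxA -HX.
have cX : GRing.comm X L by rewrite /GRing.comm -!mulmxE.
have cXk := commrX k.+1 cX.
have cXk' : X *m L ^+ k.+1 = L ^+ k.+1 *m X by rewrite !mulmxE.
have E1 : L *m L ^+ k = L ^+ k.+1 by rewrite exprS mulmxE.
rewrite -[X *m L *m _]mulmxA E1.
rewrite mulmxA [\tr (X *m D *m _)]mxtrace_mulC mulmxA -cXk'.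
by rewrite -[k.+2]addn1 natrD mulrDl mul1r.
Qed.


Lemma mnorm_sum (I : Type) (r : seq I) (F : I -> M3) :
  mnorm (\sum_(i <- r) F i) <= \sum_(i <- r) mnorm (F i).
Proof.
elim: r => [|x r IH].
  rewrite !big_nil /mnorm; under eq_bigr do under eq_bigr do rewrite mxE normr0.
  by rewrite !big1.
rewrite !big_cons; apply: (le_trans (mnormD _ _)); exact: lerD.
Qed.

Lemma exp_psum_le (x : R) n : 0 <= x ->
  \sum_(k < n) (k`!%:R)^-1 * x ^+ k <= expR x.
Proof.
move=> x0.
have -> : \sum_(k < n) (k`!%:R)^-1 * x ^+ k = series (exp_coeff x) n.
  rewrite /series /= big_mkord; apply: eq_bigr => k _; by rewrite /exp_coeff /= mulrC.
apply: nondecreasing_cvgn_le; last exact: is_cvg_series_exp_coeff.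
apply: nondecreasing_series => k _ _; rewrite /exp_coeff /=.
by apply: divr_ge0 => //; exact: exprn_ge0.
Qed.

Lemma psum_diff (L D : M3) n :
  psum (L + D) n - psum L n = \sum_(k < n) (k`!%:R)^-1 *: ((L + D) ^+ k - L ^+ k).
Proof.
rewrite /psum -sumrB; apply: eq_bigr => k _; by rewrite scalerBr.
Qed.

Section Deriv.
Variables L D H : M3.
Hypothesis HL : H *m L = L *m H.
Hypothesis d1 : mnorm D <= 1.
Let b := mnorm L + 1.

Lemma est_diff : mnorm (expm (L + D) - expm L) <= 3%:R * mnorm D * expR (2%:R * b).
Proof.
have b1 : 1 <= b by have := mnorm_ge0 L; rewrite /b; lra.
have hd := mnorm_ge0 D.
have Hc : mxcvg (fun n => psum (L + D) n - psum L n) (expm (L + D) - expm L).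
  by apply: mxcvgB; exact: mxcvg_expm.
apply: (lim_le_bound (mxcvg_mnorm Hc)) => n.
rewrite psum_diff; apply: (le_trans (@mnorm_sum _ _ _)).
apply: (@le_trans _ _ (\sum_(k < n) 3%:R * mnorm D * ((k`!%:R)^-1 * (2%:R * b) ^+ k))).
  apply: ler_sum => k _; rewrite mnormZ ger0_norm ?invr_ge0 //.
  rewrite [X in _ <= X]mulrCA; apply: ler_wpM2l; first by rewrite invr_ge0.
  exact: est_M.
rewrite -mulr_sumr; apply: ler_wpM2l; first by apply: mulr_ge0.
apply: exp_psum_le; lra.
Qed.

Lemma est_tr : `|\tr (H *m (expm (L + D) - expm L)) - \tr (H *m expm L *m D)|
   <= mnorm H * (3%:R * mnorm D ^+ 2 * expR (4%:R * b)).
Proof.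
have b1 : 1 <= b by have := mnorm_ge0 L; rewrite /b; lra.
have hd := mnorm_ge0 D.
have hH := mnorm_ge0 H.
have Hc1 : mxcvg (fun n => H *m (psum (L + D) n.+1 - psum L n.+1)) (H *m (expm (L + D) - expm L)).
  apply: (@mxcvg_mull H (fun n => psum (L + D) n.+1 - psum L n.+1)).
  apply: (@mxcvgS (fun n => psum (L + D) n - psum L n)).
  by apply: mxcvgB; exact: mxcvg_expm.
have Hc2 : mxcvg (fun n => H *m psum L n *m D) (H *m expm L *m D).
  apply: (@mxcvg_mulr D (fun n => H *m psum L n)).
  apply: (@mxcvg_mull H (fun n => psum L n)); exact: mxcvg_expm.

apply: (lim_le_bound (cvg_norm (cvgB (mxcvg_trace Hc1) (mxcvg_trace Hc2)))) => n /=.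
have E : \tr (H *m (psum (L + D) n.+1 - psum L n.+1)) - \tr (H *m psum L n *m D)
   = \sum_(k < n.+1) (k`!%:R)^-1 * \tr (H *m ((L + D) ^+ k - L ^+ k - Tk L D k)).
  have E2 : \tr (H *m psum L n *m D) = \sum_(k < n.+1) (k`!%:R)^-1 * \tr (H *m Tk L D k).
    rewrite big_ord_recl /= mulmx0 mxtrace0 mulr0 add0r.
    rewrite /psum mulmx_sumr mulmx_suml linear_sum; apply: eq_bigr => k _.
    rewrite /bump /= tr_Tk // -scalemxAr -scalemxAl mxtraceZ mulrA; congr (_ * _).
    rewrite add0n add1n factS natrM invfM mulrAC mulVf ?mul1r //.
  rewrite E2 psum_diff mulmx_sumr linear_sum -sumrB; apply: eq_bigr => k _.
  by rewrite -scalemxAr linearZ /= -mulrBr -raddfB -mulmxBr.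
rewrite -[X in `|X|]/(\tr _ - \tr _) E; apply: (le_trans (ler_norm_sum _ _ _)).
apply: (@le_trans _ _ (\sum_(k < n.+1) mnorm H * (3%:R * mnorm D ^+ 2) * ((k`!%:R)^-1 * (4%:R * b) ^+ k))).
  apply: ler_sum => k _; rewrite normrM ger0_norm ?invr_ge0 //.
  rewrite [X in _ <= X]mulrCA; apply: ler_wpM2l; first by rewrite invr_ge0.
  apply: (le_trans (mnorm_tr _ _)); rewrite -mulrA; apply: ler_wpM2l => //.
  exact: est_R.
rewrite -mulr_sumr -mulrA; apply: ler_wpM2l => //; apply: ler_wpM2l; first by apply: mulr_ge0 => //; exact: exprn_ge0.
apply: exp_psum_le; lra.
Qed.

End Deriv.

End Part1.

Section Part6.
Variable R : realType.
Local Notation M3 := 'M[R]_3.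
Local Notation C := (R[i]).
Local Notation toC := (fun x : R => (x%:C)%C).
Local Notation cRe := (@complex.Re R).
Local Notation cIm := (@complex.Im R).

Lemma Re_sum (I : Type) (r : seq I) (F : I -> C) :
  cRe (\sum_(i <- r) F i) = \sum_(i <- r) cRe (F i).
Proof.
elim: r => [|x r IH]; first by rewrite !big_nil.
by rewrite !big_cons -IH; case: (F x) => a b; case: (\sum_(i <- r) F i).
Qed.

Lemma Im_sum (I : Type) (r : seq I) (F : I -> C) :
  cIm (\sum_(i <- r) F i) = \sum_(i <- r) cIm (F i).
Proof.
elim: r => [|x r IH]; first by rewrite !big_nil; exact: erefl.
by rewrite !big_cons -IH; case: (F x) => a b; case: (\sum_(i <- r) F i).
Qed.

Lemma ReMr (x : C) (y : R) : cRe (x * (y%:C)%C) = cRe x * y.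
Proof. case: x => a b /=; ring. Qed.

Lemma ImMr (x : C) (y : R) : cIm (x * (y%:C)%C) = cIm x * y.
Proof. case: x => a b /=; ring. Qed.

Lemma ReMreal (c x : C) : cIm c = 0 -> cRe (c * x) = cRe c * cRe x.
Proof. case: c => a b /= ->; case: x => u v /=; ring. Qed.

Lemma ImMreal (c x : C) : cIm c = 0 -> cIm (c * x) = cRe c * cIm x.
Proof. case: c => a b /= ->; case: x => u v /=; ring. Qed.

Lemma map_Re_mul (z : 'rV[C]_3) (M : M3) :
  map_mx cRe (z *m map_mx toC M) = map_mx cRe z *m M.
Proof.
apply/rowP => j; rewrite !mxE Re_sum; apply: eq_bigr => l _; by rewrite !mxE ReMr.
Qed.

Lemma map_Im_mul (z : 'rV[C]_3) (M : M3) :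
  map_mx cIm (z *m map_mx toC M) = map_mx cIm z *m M.
Proof.
apply/rowP => j; rewrite !mxE Im_sum; apply: eq_bigr => l _; by rewrite !mxE ImMr.
Qed.


Lemma cplx_eq0 (v : C) : cRe v = 0 -> cIm v = 0 -> v = 0.
Proof. by case: v => a b /= -> ->. Qed.

Lemma real_eig_comm (M K : M3) : M^T = M ->
  (forall (x : 'rV[R]_3) (l : R), x *m M = l *: x -> x *m K = 0) -> K = 0.
Proof.
move=> MT HK.
pose Mc := map_mx toC M.
have Mh : Mc \is hermsymmx.
  apply: realsym_hermsym.
    apply/is_hermitianmxP; rewrite expr0 scale1r map_mx_id // /Mc map_trmx MT //.
  apply/mxOverP => i j; rewrite mxE; by rewrite complex_real.
have Mn := hermitian_normalmx Mh.
have /orthomx_spectralP Hsp := Mn.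
have Pu : spectralmx Mc \in unitmx := spectral_unit Mc.
have dreal := hermitian_spectral_diag_real Mh.
move: Hsp Pu dreal.
set P := spectralmx Mc; set dg := spectral_diag Mc => Hsp Pu dreal.
have EP : P *m Mc = diag_mx dg *m P.
  by rewrite [X in P *m X]Hsp !mulmxA mulmxV // mul1mx.
pose Kc := map_mx toC K.
have Zk : forall k, row k P *m Kc = 0.
  move=> k; set z := row k P.
  have Ez : z *m Mc = dg 0 k *: z.
    rewrite /z -row_mul EP mul_diag_mx; apply/rowP => j; by rewrite !mxE.
  have Imd : cIm (dg 0 k) = 0.
    have := mxOverP dreal 0 k; case: (dg 0 k) => u v; rewrite complex_real => /eqP.
    by [].
  have Ea : map_mx cRe z *m M = cRe (dg 0 k) *: map_mx cRe z.
    rewrite -map_Re_mul Ez; apply/rowP => j; by rewrite !mxE ReMreal.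
  have Eb : map_mx cIm z *m M = cRe (dg 0 k) *: map_mx cIm z.
    rewrite -map_Im_mul Ez; apply/rowP => j; by rewrite !mxE ImMreal.
  have Za := HK _ _ Ea; have Zb := HK _ _ Eb.
  apply/rowP => j; rewrite [RHS]mxE; apply: cplx_eq0.
    have := congr1 (fun A : 'rV[R]_3 => A 0 j) Za; rewrite -map_Re_mul !mxE => ->; done.
  have := congr1 (fun A : 'rV[R]_3 => A 0 j) Zb; rewrite -map_Im_mul !mxE => ->; done.
have PK : P *m Kc = 0.
  apply/row_matrixP => k; by rewrite row_mul Zk row0.
have K0 : Kc = 0 by rewrite -(mulKmx Pu Kc) PK mulmx0.
apply/matrixP => i j; have := congr1 (fun A : 'M[C]_3 => A i j) K0; rewrite !mxE.
by case.
Qed.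


Lemma det3 (A : M3) (f : nat -> nat -> R) :
  (forall i j : 'I_3, A i j = f i j) -> \det A =
  f 0 0 * (f 1 1 * f 2 2 - f 1 2 * f 2 1) - f 0 1 * (f 1 0 * f 2 2 - f 1 2 * f 2 0)
  + f 0 2 * (f 1 0 * f 2 1 - f 1 1 * f 2 0).
Proof.
move=> HA.
rewrite (expand_det_row _ 0) !big_ord_recl big_ord0 /cofactor.
rewrite !(expand_det_row _ 0) !big_ord_recl !big_ord0 /cofactor !det_mx11 !mxE /=.
rewrite !HA /bump /=.
ring.
Qed.


Definition nrm (x : 'rV[R]_3) : R := (x *m x^T) 0 0.
Definition Qx (x : 'rV[R]_3) : M3 := (2%:R / nrm x) *: (x^T *m x) - 1%:M.

Lemma nrmE (x : 'rV[R]_3) :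
  nrm x = x 0 (inord 0) ^+ 2 + x 0 (inord 1) ^+ 2 + x 0 (inord 2) ^+ 2.
Proof.
rewrite /nrm mxE !big_ord_recr big_ord0 /= !mxE add0r !expr2.
by congr (_ + _ + _); congr (x 0 _ * x 0 _); apply: val_inj => /=; rewrite inordK.
Qed.

Lemma nrm_gt0 (x : 'rV[R]_3) : x != 0 -> 0 < nrm x.
Proof.
move=> x0; rewrite /nrm mxE lt_neqAle; apply/andP; split; last first.
  by apply: sumr_ge0 => j _; rewrite mxE -expr2 sqr_ge0.
apply/negP => /eqP/esym/eqP; rewrite psumr_eq0; last by move=> j _; rewrite mxE -expr2 sqr_ge0.
move=> /allP H; move/negP: x0; apply; apply/eqP/rowP => j.
have := H j (mem_index_enum _); rewrite mxE -expr2 sqrf_eq0 => /eqP ->.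
by rewrite mxE.
Qed.

Lemma xxT (x : 'rV[R]_3) : x *m x^T = (nrm x)%:M.
Proof. by rewrite [LHS]mx11_scalar. Qed.

Lemma PP (x : 'rV[R]_3) : (x^T *m x) *m (x^T *m x) = nrm x *: (x^T *m x).
Proof.
by rewrite mulmxA -[x^T *m x *m x^T]mulmxA xxT mul_mx_scalar scalemxAl.
Qed.

Lemma Qx_tr x : (Qx x)^T = Qx x.
Proof. by rewrite /Qx linearB /= linearZ /= trmx_mul trmxK trmx1. Qed.

Lemma QxQx x : x != 0 -> Qx x *m Qx x = 1%:M.
Proof.
move=> x0; have n0 := nrm_gt0 x0.
rewrite /Qx mulmxBl !mulmxBr mul1mx mulmx1 -!scalemxAl -!scalemxAr PP scalerA.
rewrite scalerA opprB addrA -addrA -scalerBl.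
have -> : 2%:R / nrm x * (2%:R / nrm x) * nrm x - 2%:R / nrm x = 2%:R / nrm x.
  have nz : nrm x != 0 by rewrite gt_eqF.
  by field.
by rewrite mul1mx addrC subrK.
Qed.

Lemma Qx_rot x : x != 0 -> rotation (Qx x).
Proof.
move=> x0; split; first by rewrite Qx_tr QxQx.
have n0 := nrm_gt0 x0.
rewrite (@det3 _ (fun i j => 2%:R / nrm x * (x 0 (inord i) * x 0 (inord j)) - (i == j)%:R)).
  rewrite /=.
  have Hn := nrmE x.
  set c := 2%:R / nrm x.
  have cn : c * nrm x = 2%:R by rewrite /c mulfVK // gt_eqF.
  rewrite Hn in cn; move: cn.
  set a0 := x 0 (inord 0); set a1 := x 0 (inord 1); set a2 := x 0 (inord 2).
  move=> cn; rewrite !mulr1n !mulr0n.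
  transitivity (c * (a0 ^+ 2 + a1 ^+ 2 + a2 ^+ 2) - 1); first by ring.
  rewrite cn; lra.
move=> i j; rewrite !mxE big_ord1 !mxE !inord_val.
by rewrite !(ord1 ord0).
Qed.


Lemma Qx_comm (x : 'rV[R]_3) (M : M3) l : M^T = M -> x *m M = l *: x ->
  Qx x *m M = M *m Qx x.
Proof.
move=> MT Hx.
have Mx : M *m x^T = l *: x^T by rewrite -{1}MT -trmx_mul Hx linearZ.
rewrite /Qx mulmxBl mulmxBr mul1mx mulmx1 -scalemxAl -scalemxAr.
by rewrite -mulmxA Hx mulmxA Mx -scalemxAl -scalemxAr.
Qed.

Lemma Qx_eig (x : 'rV[R]_3) (H : M3) : x != 0 -> Qx x *m H = H *m Qx x ->
  x *m H = ((x *m H *m x^T) 0 0 / nrm x) *: x.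
Proof.
move=> x0 HQ; have n0 := nrm_gt0 x0.
have c0 : 2%:R / nrm x != 0 by rewrite mulf_neq0 // ?invr_eq0 gt_eqF.
have PH : (x^T *m x) *m H = H *m (x^T *m x).
  move: HQ; rewrite /Qx mulmxBl mulmxBr mul1mx mulmx1 -scalemxAl -scalemxAr.
  move/(congr1 (fun A => A + H)); rewrite !subrK => /(congr1 (fun A => (2%:R / nrm x)^-1 *: A)).
  by rewrite !scalerA mulVf // !scale1r.
have := congr1 (mulmx x) PH.
rewrite !mulmxA xxT mul_scalar_mx -scalemxAl => E.
rewrite (mx11_scalar (x *m H *m x^T)) mul_scalar_mx in E.
by rewrite mulrC -scalerA -E scalerA mulVf ?gt_eqF // scale1r.
Qed.

Lemma comm_crit (M H : M3) : M^T = M ->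
  (forall x : 'rV[R]_3, x != 0 -> Qx x *m M = M *m Qx x -> Qx x *m H = H *m Qx x) ->
  H *m M = M *m H.
Proof.
move=> MT HQ; apply/eqP; rewrite -subr_eq0; apply/eqP.
apply: (real_eig_comm MT) => x l Hx.
have [->|x0] := eqVneq x 0; first by rewrite mul0mx.
have Hc := Qx_comm MT Hx.
have He := Qx_eig x0 (HQ x x0 Hc).
by set mu := (_ / nrm x) in He; rewrite mulmxBr !mulmxA He Hx -!scalemxAl Hx He !scalerA mulrC subrr.
Qed.

End Part6.

Section Final.
Variable R : realType.
Local Notation M3 := 'M[R]_3.

Lemma rot_comm_H (h : M3 -> M3)
  (Hiso : forall Q C : M3, rotation Q -> posdef C ->
            Q^T *m h C *m Q = h (Q^T *m C *m Q)) (B Q : M3) :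
  posdef B -> rotation Q -> Q *m B = B *m Q -> Q *m h B = h B *m Q.
Proof.
move=> PB [QTQ dQ] QB.
have QQT : Q *m Q^T = 1%:M by apply: mulmx1C.
have E : Q^T *m B *m Q = B by rewrite -mulmxA -QB mulmxA QTQ mul1mx.
have Hi := Hiso Q B (conj QTQ dQ) PB; rewrite E in Hi.
by rewrite -{1}Hi !mulmxA QQT mul1mx.
Qed.

End Final.

Local Close Scope classical_set_scope.

Theorem theorem2 (R : realType) (alpha : 'M[R]_3 -> R) (h : 'M[R]_3 -> 'M[R]_3)
  (Hgrad : forall C : 'M[R]_3, posdef C -> sym_gradient alpha C (h C))
  (Hiso : forall Q C : 'M[R]_3, rotation Q -> posdef C ->
            Q^T *m h C *m Q = h (Q^T *m C *m Q)) :
  forall B L S : 'M[R]_3,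
    posdef B ->
    symmx L -> expm L = B ->        (* L = ln B *)
    posdef S -> S *m S = B ->       (* S = B^{1/2} *)
    sym_gradient (fun X => alpha (expm X)) L (S *m h B *m S).
Proof.
move=> B L S PB SL EL PS ES.
have [HT Hg] := Hgrad B PB.
set H := h B in HT Hg *.
have ST : S^T = S by case: PS.
have BT : B^T = B by case: PB.
have HL : H *m L = L *m H.
  apply: comm_crit => // x x0 QL.
  apply: (rot_comm_H Hiso PB (Qx_rot x0)).
  by rewrite -EL; apply: expm_comm.
have HS : H *m S = S *m H.
  apply: comm_crit => // x x0 QS.
  apply: (rot_comm_H Hiso PB (Qx_rot x0)).
  by rewrite -ES mulmxA QS -!mulmxA QS.
have SHS : S *m H *m S = H *m B by rewrite -HS -mulmxA ES.
split.
  have HB : H *m B = B *m H by rewrite -ES mulmxA HS -mulmxA HS mulmxA.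
  by rewrite /symmx SHS !trmx_mul BT HT HB.
move=> eps eps0.
set b := mnorm L + 1.
have b1 : 1 <= b by have := mnorm_ge0 L; rewrite /b; lra.
set K2 := 3%:R * expR (2%:R * b).
have K2p : 0 < K2 by rewrite /K2 mulr_gt0 // expR_gt0.
set K1 := mnorm H * (3%:R * expR (4%:R * b)).
have K1p : 0 <= K1 by rewrite /K1 mulr_ge0 ?mnorm_ge0 // mulr_ge0 // expR_ge0.
have [r' [r'0 Hr']] := Hg (eps / (2%:R * K2)) (divr_gt0 eps0 (mulr_gt0 (ltr0Sn _ 1) K2p)).
exists (Num.min (Num.min 1 (r' / K2)) (eps / (2%:R * (K1 + 1)))).
split.
  rewrite !lt_min ltr01 divr_gt0 //= divr_gt0 //; apply: mulr_gt0 => //; lra.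
move=> D SD; rewrite !lt_min => /andP[/andP[dlt1 dlt2] dlt3].
set d := mnorm D in dlt1 dlt2 dlt3 *.
have d0 : 0 <= d := mnorm_ge0 D.
have d1 : d <= 1 by lra.
set E := expm (L + D) - B.
have SE : symmx E.
  rewrite /symmx /E linearB /= BT expm_sym //.
  by rewrite /symmx linearD /= SL SD.
have hE : mnorm E <= K2 * d.
  by rewrite /E -EL /K2 mulrAC; exact: est_diff d1.
have hE2 : mnorm E < r'.
  have h' : d * K2 < r' by rewrite -ltr_pdivlMr.
  rewrite mulrC in hE; lra.
have G := Hr' E SE hE2.
have T := est_tr HL d1.
rewrite EL -/E in T.
have T' : `|\tr (H *m E) - \tr (H *m B *m D)| <= K1 * d ^+ 2.
  have -> : K1 * d ^+ 2 = mnorm H * (3%:R * d ^+ 2 * expR (4%:R * b)) by rewrite /K1; ring.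
  exact: T.
rewrite /= SHS EL.
have -> : expm (L + D) = B + E by rewrite /E addrCA subrr addr0.
have hEe : eps / (2%:R * K2) * mnorm E <= eps / 2%:R * d.
  apply: (@le_trans _ _ (eps / (2%:R * K2) * (K2 * d))).
    by apply: ler_wpM2l => //; apply: divr_ge0; [lra | apply: mulr_ge0 => //; lra].
  rewrite mulrA; apply: ler_wpM2r => //.
  have K2n : K2 != 0 by rewrite gt_eqF.
  rewrite (_ : eps / (2%:R * K2) * K2 = eps / 2%:R) //.
  by field; rewrite K2n.
have hT : K1 * d ^+ 2 <= eps / 2%:R * d.
  rewrite expr2 mulrA; apply: ler_wpM2r => //.
  have Kp : 0 < K1 + 1 by lra.
  apply: (@le_trans _ _ (K1 * (eps / (2%:R * (K1 + 1))))).
    by apply: ler_wpM2l => //; exact: ltW.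
  have Kn : K1 + 1 != 0 by rewrite gt_eqF.
  rewrite [X in _ <= X](_ : eps / 2%:R = K1 * (eps / (2%:R * (K1 + 1))) + eps / (2%:R * (K1 + 1))); last by field; rewrite Kn.
  rewrite lerDl; apply: divr_ge0; lra.
have tri := ler_distD (\tr (H *m E)) (alpha (B + E) - alpha B) (\tr (H *m B *m D)).
lra.
Qed.
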